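(* Let $X \sim \pi_0$ on $\mathcal{X}$, let $X \to W \to Z = M(W)$ be a Markov chain where $M$ is $\varepsilon$-locally differentially private in the density sense (there is a $\sigma$-finite $\mu$ with $M(w)$ having density $q(\cdot\mid w)$ w.r.t. $\mu$ and $q(z\mid w)\le e^{\varepsilon} q(z\mid w')$ for all $z,w,w'$). Let $f : \mathcal{X} \to \mathbb{R}^k$ be measurable, $L_{\rm rec} : \mathbb{R}^k \times \mathbb{R}^k \to \mathbb{R}_+$ a measurable loss, $\alpha \ge 0$ and $p(\alpha) \in [0,1]$. Suppose that \[ \mathbb{P}_{\pi_0}\big(L_{\rm rec}(f(X), v_0) \le \alpha\big) \le p(\alpha) \quad \text{for all fixed } v_0 \in \mathbb{R}^k. \] Then $M$ is $(\alpha, e^{\varepsilon} p(\alpha), f)$-protected against reconstruction for $L_{\rm rec}$; that is, for every measurable estimator $\widehat v : \mathcal{Z} \to \mathbb{R}^k$ and (almost) every $z$, \[ \mathbb{P}\big(L_{\rm rec}(f(X), \widehat v(z)) \le \alpha \,\big|\, Z = z\big) \le e^{\varepsilon} p(\alpha). \]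
   Context: $\varepsilon$-local differential privacy of $M$: $\mathbb{P}(M(w)\in S)\le e^{\varepsilon}\mathbb{P}(M(w')\in S)$ for all inputs $w,w'$ and measurable $S$. A mechanism $M$ is $(\alpha,p,f)$-protected against reconstruction for loss $L_{\rm rec}$ if for every estimator $\widehat v:\mathcal Z\to\mathbb R^k$, $\sup_z \mathbb P(L_{\rm rec}(f(X),\widehat v(z))\le\alpha \mid M(W)=z)\le p$. *)

(* Defs.v *)
From HB Require Import structures.
From mathcomp Require Import all_boot all_order all_algebra.
From mathcomp Require Import all_classical all_reals all_analysis.
Set Implicit Arguments. Unset Strict Implicit. Unset Printing Implicit Defensive.
Import Order.TTheory GRing.Theory Num.Theory.
Import numFieldNormedType.Exports.
Local Open Scope classical_set_scope.
Local Open Scope ring_scope.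

Definition Rk (R : realType) (k : nat) : measurableType _ :=
  g_sigma_algebraType (@open 'rV[R]_k).

Definition ldp_density (R : realType) (W Z : Type) (q : W -> Z -> R) (eps : R) :=
  forall z w w', q w z <= expR eps * q w' z.

(* Joint law of (X, Z) for the Markov chain X -> W -> Z = M(W) with
   X ~ pi0, W | X=x ~ kappa x, and Z | W=w having density q w . wrt mu. *)
Definition jointXZ (R : realType) dX dW dZ (X : measurableType dX)
  (W : measurableType dW) (Z : measurableType dZ)
  (pi0 : {measure set X -> \bar R}) (kappa : X -> {measure set W -> \bar R})
  (mu : {measure set Z -> \bar R}) (q : W -> Z -> R) (C : set (X * Z)) : \bar R :=
  (\int[pi0]_x \int[kappa x]_w \int[mu]_z ((\1_C (x, z))%:E * (q w z)%:E))%E.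

Definition lawZ (R : realType) dX dW dZ (X : measurableType dX)
  (W : measurableType dW) (Z : measurableType dZ)
  (pi0 : {measure set X -> \bar R}) (kappa : X -> {measure set W -> \bar R})
  (mu : {measure set Z -> \bar R}) (q : W -> Z -> R) (B : set Z) : \bar R :=
  jointXZ pi0 kappa mu q (setT `*` B).

(* g is a version of the conditional probability P((X,Z) \in E | Z), i.e.
   g(z) = P(E | Z = z): g is measurable and for every measurable B,
   P(E /\ Z \in B) = \int_B g d(law of Z)   (the latter written as the
   integral against the composite measure defining the law of Z). *)
Definition cond_prob_given_Z (R : realType) dX dW dZ (X : measurableType dX)
  (W : measurableType dW) (Z : measurableType dZ)
  (pi0 : {measure set X -> \bar R}) (kappa : X -> {measure set W -> \bar R})
  (mu : {measure set Z -> \bar R}) (q : W -> Z -> R) (E : set (X * Z))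
  (g : Z -> R) :=
  measurable_fun setT g /\
  forall B : set Z, measurable B ->
    jointXZ pi0 kappa mu q (E `&` (setT `*` B)) =
    (\int[pi0]_x \int[kappa x]_w \int[mu]_(z in B) ((g z)%:E * (q w z)%:E))%E.

(* Main.v *)
Require Import Defs.
From HB Require Import structures.
From mathcomp Require Import all_boot all_order all_algebra.
From mathcomp Require Import all_classical all_reals all_analysis.
From mathcomp Require Import measurable_realfun.
Import Order.TTheory GRing.Theory Num.Theory.
Import numFieldNormedType.Exports.
Local Open Scope classical_set_scope.
Local Open Scope ring_scope.

Lemma fub (R : realType) d1 d2 (T1 : measurableType d1) (T2 : measurableType d2)
  (m1 : {measure set T1 -> \bar R}) (m2 : {measure set T2 -> \bar R})
  (s1 : sigma_finite setT m1) (s2 : sigma_finite setT m2)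
  (f : T1 * T2 -> \bar R) (mf : measurable_fun setT f) (f0 : forall z, (0 <= f z)%E) :
  (\int[m1]_x \int[m2]_y f (x,y) = \int[m2]_y \int[m1]_x f (x,y))%E.
Proof.
pose H2 := isSFinite.Build _ _ _ _ (sfinite_measure_sigma_finite s1).
pose H3 := isSigmaFinite.Build _ _ _ _ s1.
pose m1' := HB.pack_for (SigmaFiniteMeasure.type T1 R) (Measure.sort m1) H2 H3.
pose H2' := isSFinite.Build _ _ _ _ (sfinite_measure_sigma_finite s2).
pose H3' := isSigmaFinite.Build _ _ _ _ s2.
pose m2' := HB.pack_for (SigmaFiniteMeasure.type T2 R) (Measure.sort m2) H2' H3'.
have -> : m1 = m1' :> {measure set T1 -> \bar R} by exact: eq_measure.
have -> : m2 = m2' :> {measure set T2 -> \bar R} by exact: eq_measure.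
exact: (@fubini_tonelli _ _ _ _ R m1' m2' f mf f0).
Qed.

Lemma fubF (R : realType) d1 d2 (T1 : measurableType d1) (T2 : measurableType d2)
  (m2 : {measure set T2 -> \bar R})
  (s2 : sigma_finite setT m2)
  (f : T1 * T2 -> \bar R) (mf : measurable_fun setT f) (f0 : forall z, (0 <= f z)%E) :
  measurable_fun setT (fun x => \int[m2]_y f (x,y))%E.
Proof.
pose H2' := isSFinite.Build _ _ _ _ (sfinite_measure_sigma_finite s2).
pose H3' := isSigmaFinite.Build _ _ _ _ s2.
pose m2' := HB.pack_for (SigmaFiniteMeasure.type T2 R) (Measure.sort m2) H2' H3'.
have -> : m2 = m2' :> {measure set T2 -> \bar R} by exact: eq_measure.
exact: (@measurable_fun_fubini_tonelli_F _ _ T1 _ R m2' f mf f0).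
Qed.

Lemma kersf (R : realType) d1 d2 (X : measurableType d1) (W : measurableType d2)
  (kappa : R.-pker X ~> W) x : sigma_finite setT (kappa x).
Proof. by apply: fin_num_fun_sigma_finite; [rewrite measure0|exact: (@kernel_finite_transition _ _ _ _ R kappa x)]. Qed.
Arguments kersf {R d1 d2 X W}.

Lemma pisf (R : realType) d1 (X : measurableType d1) (pi0 : probability X R) : sigma_finite setT pi0.
Proof. exact: sigma_finiteT. Qed.
Arguments pisf {R d1 X}.

Lemma int_ind (R : realType) d (T : measurableType d) (mu : {measure set T -> \bar R})
  (S : set T) (f : T -> \bar R) :
  (\int[mu]_(x in S) f x = \int[mu]_x ((\1_S x)%:E * f x))%E.
Proof.
rewrite integral_mkcond epatch_indic; apply: eq_integral => x _ /=; by rewrite muleC.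
Qed.

Lemma meas_gt (R : realType) d (T : measurableType d) (h : T -> R)
  (mh : measurable_fun setT h) (a : R) : measurable [set x | a < h x].
Proof.
have := mh measurableT _ (measurable_itv `]a, +oo[); rewrite setTI.
rewrite (_ : _ @^-1` _ = [set x | a < h x]) //.
by apply/seteqP; split => x /=; rewrite in_itv /= ?andbT.
Qed.

Lemma meas_le (R : realType) d (T : measurableType d) (h : T -> R)
  (mh : measurable_fun setT h) (a : R) : measurable [set x | h x <= a].
Proof.
have := mh measurableT _ (measurable_itv `]-oo, a]); rewrite setTI.
rewrite (_ : _ @^-1` _ = [set x | h x <= a]) //.
Qed.

Section kfst.
Context (R : realType) (dX dW dZ : measure_display)
  (X : measurableType dX) (W : measurableType dW) (Z : measurableType dZ).
Variable kappa : R.-pker X ~> W.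

Definition kfst (xz : X * Z) : {measure set W -> \bar R} := kappa xz.1.

Lemma kfst_meas U : measurable U -> measurable_fun setT (kfst ^~ U).
Proof.
move=> mU; rewrite /kfst.
exact: (measurableT_comp (measurable_kernel kappa U mU) measurable_fst).
Qed.

HB.instance Definition _ := isKernel.Build _ _ (X * Z)%type W R kfst kfst_meas.

Lemma kfst_prob xz : kfst xz setT = 1%E.
Proof. exact: prob_kernel. Qed.

HB.instance Definition _ := Kernel_isProbability.Build _ _ (X * Z)%type W R kfst kfst_prob.
End kfst.

Section main.
Local Open Scope ereal_scope.
Context (R : realType) (dX dW dZ : measure_display)
  (X : measurableType dX) (W : measurableType dW) (Z : measurableType dZ).
Variables (pi0 : probability X R) (kappa : R.-pker X ~> W)
  (mu : {measure set Z -> \bar R}) (q : W -> Z -> R).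
Hypotheses (smu : sigma_finite setT mu)
  (mq : measurable_fun setT (fun wz : W * Z => q wz.1 wz.2))
  (q0 : forall w z, (0 <= q w z)%R).

Definition Q (xz : X * Z) : \bar R := \int[kappa xz.1]_w (q w xz.2)%:E.

Lemma mqz z : measurable_fun setT (fun w => q w z).
Proof.
apply: (@measurableT_comp _ _ _ _ _ _ (fun wz : W * Z => q wz.1 wz.2) _ (fun w => (w, z))) => //.
Qed.

Lemma mQ : measurable_fun setT Q.
Proof.
have := @measurable_fun_integral_finite_kernel _ _ (X * Z)%type W R
  (fun p : (X * Z) * W => (q p.2 p.1.2)%:E) (@kfst R _ _ _ X W Z kappa).
apply.
- by move=> ?; rewrite lee_fin.
- apply/measurable_EFinP.
  apply: (@measurableT_comp _ _ _ _ _ _ (fun wz : W * Z => q wz.1 wz.2) _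
    (fun p : (X * Z) * W => (p.2, p.1.2))) => //.
  apply: measurable_fun_pair; first exact: measurable_snd.
  exact: (measurableT_comp measurable_snd measurable_fst).
Qed.

Lemma Q0 xz : 0 <= Q xz.
Proof. by apply: integral_ge0 => w _; rewrite lee_fin. Qed.

Lemma mQz z : measurable_fun setT (fun x => Q (x, z)).
Proof.
apply: (@measurableT_comp _ _ _ _ _ _ Q _ (fun x => (x, z))); first exact: mQ.
by apply: measurable_fun_pair => //=.
Qed.

Definition m z := \int[pi0]_x Q (x, z).

Lemma mm : measurable_fun setT m.
Proof.
have H : measurable_fun setT (fun zx : Z * X => Q (zx.2, zx.1)).
  apply: (@measurableT_comp _ _ _ _ _ _ Q _ (fun zx : Z * X => (zx.2, zx.1))); first exact: mQ.
  by apply: measurable_fun_pair.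
exact: (@fubF R _ _ Z X pi0 (pisf pi0) _ H (fun _ => Q0 _)).
Qed.

Lemma m0 z : 0 <= m z.
Proof. by apply: integral_ge0 => x _; exact: Q0. Qed.

Lemma swap (h : X * Z -> R) (mh : measurable_fun setT h) (h0 : forall xz, (0 <= h xz)%R) :
  \int[pi0]_x \int[kappa x]_w \int[mu]_z ((h (x,z))%:E * (q w z)%:E) =
  \int[mu]_z \int[pi0]_x ((h (x,z))%:E * Q (x,z)).
Proof.
transitivity (\int[pi0]_x \int[mu]_z ((h (x,z))%:E * Q (x,z))).
  apply: eq_integral => x _.
  rewrite (@fub R _ _ W Z (kappa x) mu (kersf kappa x) smu
    (fun wz => (h (x, wz.2))%:E * (q wz.1 wz.2)%:E)) /=; last 2 first.
  - apply: emeasurable_funM; apply/measurable_EFinP => //.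
    apply: (@measurableT_comp _ _ _ _ _ _ h _ (fun wz : W * Z => (x, wz.2))) => //.
    exact: measurable_fun_pair (measurable_cst x) measurable_snd.
  - by move=> ?; rewrite -EFinM lee_fin mulr_ge0.
  apply: eq_integral => z _; rewrite /Q /= ge0_integralZl //.
  - by apply/measurable_EFinP; exact: mqz.
  - by move=> ? _; rewrite lee_fin.
  - by rewrite lee_fin.
apply: (@fub R _ _ X Z pi0 mu (pisf pi0) smu (fun xz => (h xz)%:E * Q xz)).
- by apply: emeasurable_funM; [apply/measurable_EFinP|exact: mQ].
- by move=> ?; rewrite mule_ge0 ?lee_fin //; exact: Q0.
Qed.

Lemma Qle (eps : R) (hl : ldp_density q eps) x z : Q (x, z) <= (expR eps)%:E * m z.
Proof.
have a w x' : (q w z)%:E <= (expR eps)%:E * Q (x', z).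
  rewrite /Q /= -ge0_integralZl //; last 2 first.
  - by apply/measurable_EFinP; exact: mqz.
  - by move=> ? _; rewrite lee_fin.
  rewrite -[leLHS]mule1 -(@prob_kernel _ _ _ _ _ kappa x') -(integral_cst (kappa x')) //.
  apply: ge0_le_integral => //.
  - by move=> ? _; rewrite lee_fin.
  - by apply/measurable_funeM/measurable_EFinP; exact: mqz.
  - by move=> w' _; rewrite -EFinM lee_fin; exact: hl.
have b w : (q w z)%:E <= (expR eps)%:E * m z.
  rewrite /m -ge0_integralZl //; last 2 first.
  - exact: mQz.
  - by move=> ? _; exact: Q0.
  rewrite -[leLHS]mule1 -(probability_setT pi0) -(integral_cst pi0) //.
  apply: ge0_le_integral => //.
  - by move=> ? _; rewrite lee_fin.
  - by apply/measurable_funeM; exact: mQz.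
  - by move=> x' _; exact: a.
rewrite /Q /= -[leRHS]mule1 -(@prob_kernel _ _ _ _ _ kappa x) -(integral_cst (kappa x)) //.
apply: ge0_le_integral => //.
- by move=> ? _; rewrite lee_fin.
- by apply/measurable_EFinP; exact: mqz.
all: by move=> w _; exact: b.
Qed.

Lemma keyS (eps p : R) (hl : ldp_density q eps) (hp : (0 <= p)%R)
  (E : set (X * Z)) (mE : measurable E)
  (hE : forall z, pi0 [set x | E (x, z)] <= p%:E)
  (S : set Z) (mS : measurable S) z :
  \int[pi0]_x ((\1_(E `&` (setT `*` S)) (x, z))%:E * Q (x, z)) <=
  ((expR eps * p) * \1_S z)%:E * m z.
Proof.
have [Sz|nSz] := pselect (S z); last first.
  rewrite indicE memNset // mulr0 mul0e integral0_eq // => x _.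
  by rewrite indicE memNset ?mul0e // => -[_ [_ /= ?]].
have Ez : measurable [set x | E (x, z)].
  have := measurable_ysection z mE.
  rewrite /ysection (_ : [set x | (x, z) \in E] = [set x | E (x, z)]) //.
  by apply/seteqP; split => x /=; rewrite inE.
rewrite (eq_integral (fun x => (\1_[set x | E (x, z)] x)%:E * Q (x, z))); last first.
  move=> x _; congr (_%:E * _); rewrite !indicE.
  have [Exz|nExz] := pselect (E (x, z)).
    by rewrite !mem_set.
  by rewrite !memNset // => -[].
apply: (@le_trans _ _ (\int[pi0]_x ((\1_[set x | E (x, z)] x)%:E * ((expR eps)%:E * m z)))).
  apply: ge0_le_integral => //.
  - by move=> x _; apply: mule_ge0; [rewrite lee_fin|exact: Q0].
  - by apply: emeasurable_funM; [apply/measurable_EFinP; exact: measurable_indic|exact: mQz].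
  - by apply: emeasurable_funM; [apply/measurable_EFinP; exact: measurable_indic|exact: measurable_cst].
  - by move=> x _; apply: lee_wpmul2l; [rewrite lee_fin|exact: Qle].
have MF : measurable_fun setT (fun x => (\1_[set x | E (x, z)] x : R)%:E).
  by apply/measurable_EFinP; exact: measurable_indic.
have K0 : 0 <= (expR eps)%:E * m z.
  by apply: mule_ge0; [rewrite lee_fin expR_ge0|exact: m0].
rewrite (@ge0_integralZr _ _ _ pi0 setT measurableT _ MF _ _ K0); last first.
  by move=> x _; rewrite lee_fin.
rewrite integral_indic // setIT indicE mem_set // mulr1 EFinM.
rewrite [leRHS](_ : _ = p%:E * ((expR eps)%:E * m z)); last first.
  by rewrite muleA (muleC p%:E).
apply: lee_wpmul2r; last exact: hE.
by apply: mule_ge0; [rewrite lee_fin expR_ge0|exact: m0].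
Qed.

Lemma pullE (r : R) (r0 : (0 <= r)%R) z :
  \int[pi0]_x (r%:E * Q (x, z)) = r%:E * m z.
Proof. by rewrite ge0_integralZl //; [exact: mQz|move=> ? _; exact: Q0]. Qed.

Lemma lawZE S (mS : measurable S) :
  lawZ pi0 kappa mu q S = \int[mu]_z ((\1_S z)%:E * m z).
Proof.
rewrite /lawZ /jointXZ (@swap (fun xz => \1_(setT `*` S) xz)) //.
- apply: eq_integral => z _; rewrite -pullE //.
  apply: eq_integral => x _; congr (_%:E * _); rewrite !indicE.
  have [Sz|nSz] := pselect (S z).
    by rewrite !mem_set.
  by rewrite !memNset // => -[].
- by apply: measurable_indic; exact: measurableX.
Qed.

Lemma condE (g : Z -> R) (mg : measurable_fun setT g) S (mS : measurable S)
  (g0 : forall z, S z -> (0 <= g z)%R) :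
  \int[pi0]_x \int[kappa x]_w \int[mu]_(z in S) ((g z)%:E * (q w z)%:E) =
  \int[mu]_z ((\1_S z * g z)%:E * m z).
Proof.
have h0 z : (0 <= \1_S z * g z)%R.
  rewrite indicE; have [Sz|nSz] := pselect (S z).
    by rewrite mem_set // mul1r g0.
  by rewrite memNset // mul0r.
transitivity (\int[pi0]_x \int[kappa x]_w \int[mu]_z
   ((((fun xz : X * Z => \1_S xz.2 * g xz.2) (x, z)))%:E * (q w z)%:E)).
  apply: eq_integral => x _; apply: eq_integral => w _.
  rewrite int_ind; apply: eq_integral => z _ /=.
  by rewrite muleA -EFinM.
have MH : measurable_fun setT (fun xz : X * Z => \1_S xz.2 * g xz.2)%R.
  apply: measurable_funM.
    apply: (@measurableT_comp _ _ _ _ _ _ (\1_S : Z -> R) _ snd) => //.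
  by apply: (@measurableT_comp _ _ _ _ _ _ g _ snd).
rewrite (@swap _ MH (fun xz => h0 xz.2)).
by apply: eq_integral => z _ /=; rewrite pullE.
Qed.

Lemma mint (F : X * Z -> \bar R) (mF : measurable_fun setT F)
  (F0 : forall xz, 0 <= F xz) :
  measurable_fun setT (fun z => \int[pi0]_x F (x, z)).
Proof.
have H : measurable_fun setT (fun zx : Z * X => F (zx.2, zx.1)).
  apply: (@measurableT_comp _ _ _ _ _ _ F _ (fun zx : Z * X => (zx.2, zx.1))) => //.
  by apply: measurable_fun_pair.
exact: (@fubF R _ _ Z X pi0 (pisf pi0) _ H (fun _ => F0 _)).
Qed.

Lemma lawZT (q1 : forall w, \int[mu]_z (q w z)%:E = 1) :
  lawZ pi0 kappa mu q setT = 1.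
Proof.
rewrite /lawZ /jointXZ.
transitivity (\int[pi0]_x cst 1 x); last first.
  by rewrite integral_cst // mul1e; exact: probability_setT.
apply: eq_integral => x _.
transitivity (\int[kappa x]_w cst 1 w); last first.
  by rewrite integral_cst // mul1e prob_kernel.
apply: eq_integral => w _.
rewrite -(q1 w) /=; apply: eq_integral => z _.
by rewrite setXTT indicT /= mul1e.
Qed.

Lemma final (q1 : forall w, \int[mu]_z (q w z)%:E = 1) (eps p : R)
  (hl : ldp_density q eps) (p0 : (0 <= p)%R)
  (E : set (X * Z)) (mE : measurable E)
  (hE : forall z, pi0 [set x | E (x, z)] <= p%:E)
  (g : Z -> R) (mg : measurable_fun setT g)
  (hg : forall B, measurable B ->
     jointXZ pi0 kappa mu q (E `&` (setT `*` B)) =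
     \int[pi0]_x \int[kappa x]_w \int[mu]_(z in B) ((g z)%:E * (q w z)%:E)) :
  lawZ pi0 kappa mu q [set z | (expR eps * p < g z)%R] = 0.
Proof.
set c := (expR eps * p)%R.
have c0 : (0 <= c)%R by rewrite mulr_ge0 // expR_ge0.
have ineq S (mS : measurable S) (gS : forall z, S z -> (0 <= g z)%R) :
    \int[mu]_z ((\1_S z * g z)%:E * m z) <=
    c%:E * \int[mu]_z ((\1_S z)%:E * m z).
  rewrite -condE // -hg // /jointXZ.
  have mC : measurable (E `&` (setT `*` S)) by apply: measurableI => //; exact: measurableX.
  rewrite (@swap (fun xz => \1_(E `&` (setT `*` S)) xz)) //; last first.
    exact: measurable_indic.
  rewrite -ge0_integralZl //; last 2 first.
  - by apply: emeasurable_funM; [apply/measurable_EFinP; exact: measurable_indic|exact: mm].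
  - by move=> z _; apply: mule_ge0; [rewrite lee_fin|exact: m0].
  apply: ge0_le_integral => //.
  - by move=> z _; apply: integral_ge0 => x _; apply: mule_ge0; [rewrite lee_fin|exact: Q0].
  - apply: (@mint (fun xz => (\1_(E `&` (setT `*` S)) xz)%:E * Q xz)).
      by apply: emeasurable_funM; [apply/measurable_EFinP; exact: measurable_indic|exact: mQ].
    by move=> xz; apply: mule_ge0; [rewrite lee_fin|exact: Q0].
  - apply/measurable_funeM.
    by apply: emeasurable_funM; [apply/measurable_EFinP; exact: measurable_indic|exact: mm].
  - by move=> z _; rewrite muleA -EFinM; exact: keyS.
have L1 S (mS : measurable S) : \int[mu]_z ((\1_S z)%:E * m z) <= 1.
  rewrite -(lawZT q1) lawZE //.
  apply: ge0_le_integral => //.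
  - by move=> z _; apply: mule_ge0; [rewrite lee_fin|exact: m0].
  - by apply: emeasurable_funM; [apply/measurable_EFinP; exact: measurable_indic|exact: mm].
  - by apply: emeasurable_funM; [apply/measurable_EFinP; exact: measurable_indic|exact: mm].
  - move=> z _; apply: lee_wpmul2r; first exact: m0.
    by rewrite lee_fin indicT indicE; case: (_ \in _) => /=; rewrite ?ler01.
pose B (n : nat) := [set z | (c + n.+1%:R^-1 < g z)%R].
have mB n : measurable (B n) by exact: meas_gt.
have Bn0 n : \int[mu]_(z in B n) m z = 0.
  rewrite int_ind.
  have gB z : B n z -> (0 <= g z)%R.
    move=> /= Bz; apply: (le_trans c0); apply: ltW; apply: le_lt_trans Bz.
    by rewrite lerDl invr_ge0.
  have h1 := ineq _ (mB n) gB.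
  have h2 : (c + n.+1%:R^-1)%:E * \int[mu]_z ((\1_(B n) z)%:E * m z) <=
            \int[mu]_z ((\1_(B n) z * g z)%:E * m z).
    have MI : measurable_fun setT (fun z => (\1_(B n) z : R)%:E * m z).
      by apply: emeasurable_funM; [apply/measurable_EFinP; exact: measurable_indic|exact: mm].
    have F0 : forall z, setT z -> 0 <= (\1_(B n) z : R)%:E * m z.
      by move=> z _; apply: mule_ge0; [rewrite lee_fin|exact: m0].
    have K0 : 0 <= (c + n.+1%:R^-1)%:E by rewrite lee_fin addr_ge0 // invr_ge0.
    rewrite -(@ge0_integralZl _ _ _ mu setT measurableT _ MI _ F0 K0).
    apply: ge0_le_integral => //.
    - by move=> z _; apply: mule_ge0; [rewrite lee_fin addr_ge0 // invr_ge0|apply: mule_ge0; [rewrite lee_fin|exact: m0]].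
    - apply/measurable_funeM.
      by apply: emeasurable_funM; [apply/measurable_EFinP; exact: measurable_indic|exact: mm].
    - apply: emeasurable_funM; last exact: mm.
      apply/measurable_EFinP; apply: measurable_funM => //; exact: measurable_indic.
    - move=> z _; rewrite muleA -EFinM; apply: lee_wpmul2r; first exact: m0.
      rewrite lee_fin indicE; have [Bz|nBz] := pselect (B n z).
        by rewrite mem_set // mulr1 mul1r ltW.
      by rewrite memNset // mulr0 mul0r.
  have L0 : 0 <= \int[mu]_z ((\1_(B n) z)%:E * m z).
    by apply: integral_ge0 => z _; apply: mule_ge0; [rewrite lee_fin|exact: m0].
  have := le_trans h2 h1; have := L1 _ (mB n); move: L0.
  case: (\int[mu]_z ((\1_(B n) z)%:E * m z)) => [r| |] //= r0 _.
  rewrite -!EFinM lee_fin mulrDl gerDl pmulr_rle0 ?invr_gt0 // => r0'.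
  by congr EFin; apply/eqP; rewrite eq_le r0' -lee_fin.
rewrite lawZE //; last exact: meas_gt.
rewrite -int_ind.
have -> : [set z | (c < g z)%R] = \bigcup_n B n.
  apply/seteqP; split => z /=.
    by move=> /ltr_add_invr [n Hn]; exists n.
  move=> [n _ Bz]; apply: lt_trans Bz.
  by rewrite ltrDl invr_gt0.
have nd : nondecreasing_seq B.
  move=> a b ab; apply/subsetPset => z /=; apply: le_lt_trans.
  by rewrite lerD2l lef_pV2 ?posrE // ler_nat.
have H := @ge0_nondecreasing_set_cvg_integral _ _ _ B m mu nd mB
  (fun i => measurable_funTS mm) (fun i x _ => m0 x).
rewrite (_ : (fun i => \int[mu]_(x in B i) m x) = cst 0) in H; last first.
  by apply/funext => n; exact: Bn0.
by rewrite -(cvg_lim _ H) // lim_cst.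
Qed.

End main.

Theorem lemma2p2 (R : realType) (dX dW dZ : measure_display)
  (X : measurableType dX) (W : measurableType dW) (Z : measurableType dZ)
  (k : nat)
  (pi0 : probability X R) (kappa : R.-pker X ~> W)
  (mu : {measure set Z -> \bar R}) (q : W -> Z -> R) (eps : R)
  (f : X -> Rk R k) (Lrec : Rk R k -> Rk R k -> R)
  (alpha p : R) :
  sigma_finite setT mu ->
  measurable_fun setT (fun wz : W * Z => q wz.1 wz.2) ->
  (forall w z, 0 <= q w z) ->
  (forall w, (\int[mu]_z (q w z)%:E = 1)%E) ->
  ldp_density q eps ->
  measurable_fun setT f ->
  measurable_fun setT (fun uv : Rk R k * Rk R k => Lrec uv.1 uv.2) ->
  (forall u v, 0 <= Lrec u v) ->
  0 <= alpha -> 0 <= p <= 1 ->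
  (forall v0 : Rk R k, pi0 [set x | (Lrec (f x) v0 <= alpha)%R] <= p%:E)%E ->
  forall (vhat : Z -> Rk R k), measurable_fun setT vhat ->
  forall g : Z -> R,
    cond_prob_given_Z pi0 kappa mu q
      [set xz | Lrec (f xz.1) (vhat xz.2) <= alpha] g ->
    lawZ pi0 kappa mu q [set z | expR eps * p < g z] = 0%E.
Proof.
move=> smu mq q0 q1 hl mf mL L0 a0 /andP[p0 p1] hp vhat mv g [mg hg].
have mE : measurable [set xz : X * Z | Lrec (f xz.1) (vhat xz.2) <= alpha].
  apply: (@meas_le R _ (X * Z)%type (fun xz : X * Z => Lrec (f xz.1) (vhat xz.2))).
  apply: (@measurableT_comp _ _ _ _ _ _ (fun uv : Rk R k * Rk R k => Lrec uv.1 uv.2) _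
    (fun xz : X * Z => (f xz.1, vhat xz.2))) => //.
  apply: measurable_fun_pair.
  - by apply: (@measurableT_comp _ _ _ _ _ _ f _ fst).
  - by apply: (@measurableT_comp _ _ _ _ _ _ vhat _ snd).
exact: (@final R dX dW dZ X W Z pi0 kappa mu q smu mq q0 q1 eps p hl p0 _ mE
  (fun z => hp (vhat z)) g mg hg).
Qed.
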